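(* Let $n\ge 1$, and suppose that for each $j<n$, $\tau^j_0,\tau^j_1,\ldots,\tau^j_{m_j}$ is an $(n+1)$-train. Let $c:[\mathbb{N}]^2\rightarrow\{R,B\}$ be any coloring. Then there is a function $c^*:\bigcup_{j<n}\bigcup_{i\le m_j}\tau^j_i\rightarrow\{R,B\}$ such that for every $j<n$ and $i\le m_j$ and every $\iota\in\{R,B\}$: if $c$ restricted to $[\tau^j_i]^2$ is constantly equal to $\iota$, then there is some $a\in\tau^j_i$ with $c^*(a)=\overline{\iota}$.
   Context: $[X]^2$ denotes the set of unordered $2$-element subsets of $X$. For $\iota\in\{R,B\}$, $\overline{\iota}$ denotes the opposite color: $\overline{R}=B$, $\overline{B}=R$. For $m\ge 1$, an $m$-train is a finite sequence $\tau_0,\tau_1,\ldots,\tau_k$ of pairwise distinct subsets of $\mathbb{N}$, each of size exactly $m$, such that for every $i<k$ and every $a\in\tau_{i+1}\setminus\tau_i$, we have $a>\max\tau_i$ (i.e. $a$ exceeds every element of $\tau_i$). *)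

(* Defs.v *)
From mathcomp Require Import all_boot.
Set Implicit Arguments. Unset Strict Implicit. Unset Printing Implicit Defensive.

Inductive color := R | B.
Definition opp (i : color) : color := match i with R => B | B => R end.

(* A finite subset of N is represented by a duplicate-free list of naturals
   (membership via \in, equality of sets via =i).
   [is_train m k t]: t 0, t 1, ..., t k is an m-train. *)
Definition is_train (m k : nat) (t : nat -> seq nat) : Prop :=
  [/\ (forall i, i <= k -> uniq (t i) /\ size (t i) = m),
      (forall i i', i <= k -> i' <= k -> i <> i' -> ~ (t i =i t i')) &
      (forall i, i < k -> forall a, a \in t i.+1 -> a \notin t i ->
         forall b, b \in t i -> b < a)].

(* A coloring of [N]^2 is given by c : nat -> nat -> color, where the
   unordered pair {a,b} with a < b receives color c a b. *)
Definition mono_on (c : nat -> nat -> color) (s : seq nat) (iota : color) : Prop :=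
  forall a b, a \in s -> b \in s -> a < b -> c a b = iota.

(* Main.v *)
From HB Require Import structures.
Require Import Defs.
From mathcomp Require Import all_boot zify.
Set Implicit Arguments. Unset Strict Implicit. Unset Printing Implicit Defensive.

Definition ceqb (x y : color) : bool :=
  match x, y with R, R => true | B, B => true | _, _ => false end.
Lemma ceqbP : Equality.axiom ceqb.
Proof. by case; case; constructor. Qed.
HB.instance Definition _ := hasDecEq.Build color ceqbP.

Lemma oppK i : opp (opp i) = i. Proof. by case: i. Qed.
Lemma opp_neq i : opp i != i. Proof. by case: i. Qed.

Definition minf (P : nat -> bool) (f : nat -> nat) (d : nat) (s : seq nat) :=
  foldr (fun i acc => if P i then minn (f i) acc else acc) d s.

Lemma minf_le_d (P : pred nat) (f : nat -> nat) d s : minf P f d s <= d.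
Proof. elim: s => //= i s IH; case: (P i) => //; lia. Qed.

Lemma minf_le (P : pred nat) (f : nat -> nat) d (s : seq nat) i : i \in s -> P i -> minf P f d s <= f i.
Proof.
elim: s => //= a s IH; rewrite in_cons => /orP [/eqP-> ->| /IH H /H]; first lia.
case: (P a) => //; lia.
Qed.

Lemma minf_ge (P : pred nat) (f : nat -> nat) d (s : seq nat) b : (forall i, i \in s -> P i -> b <= f i) -> b <= d -> b <= minf P f d s.
Proof.
elim: s => //= a s IH H Hd.
have IH' : b <= minf P f d s by apply: IH => // i Hi; apply: H; rewrite in_cons Hi orbT.
case Pa: (P a) => //. have := H a (mem_head _ _) Pa. lia.
Qed.

Lemma minf_ex (P : pred nat) (f : nat -> nat) d (s : seq nat) : minf P f d s < d -> exists2 i, i \in s & P i && (f i == minf P f d s).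
Proof.
elim: s => [|a s IH] /=; first by rewrite ltnn.
case Pa: (P a) => H; last first.
  by case: (IH H) => i Hi Hp; exists i => //; rewrite in_cons Hi orbT.
case: (leqP (f a) (minf P f d s)) => Hl.
  by exists a; rewrite ?mem_head // Pa /=; apply/eqP; lia.
have H2 : minf P f d s < d by lia.
case: (IH H2) => i Hi /andP [Hp /eqP Hf]; exists i; first by rewrite in_cons Hi orbT.
rewrite Hp /=; apply/eqP; lia.
Qed.

Lemma cnt_sub (P Q : pred nat) (s1 s2 : seq nat) :
  uniq s1 -> (forall a, a \in s1 -> P a -> (a \in s2) && Q a) -> count P s1 <= count Q s2.
Proof.
move=> u H; rewrite -!size_filter; apply: uniq_leq_size; first exact: filter_uniq.
move=> a; rewrite !mem_filter => /andP [Pa a1].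
by case/andP: (H a a1 Pa) => -> ->.
Qed.

Lemma count_succ (s : seq nat) k : uniq s ->
  count (fun a => a < k.+1) s = count (fun a => a < k) s + (k \in s).
Proof.
elim: s => //= a s IH /andP [an u]; rewrite IH // in_cons.
case: (eqVneq a k) => [Ek|Nk].
  subst a; rewrite ltnSn ltnn (negbTE an) /=; lia.
rewrite ltnS leq_eqVlt (negbTE Nk) /=; lia.
Qed.

Lemma count_le1 (T : seq nat) k :
  uniq T -> (forall a b, a \in T -> b \in T -> a < k -> b < k -> a < b -> False) ->
  count (fun a => a < k) T <= 1.
Proof.
elim: T => //= x T IH /andP [xn u] H.
have IH' : count (fun a => a < k) T <= 1.
  by apply: IH => // a b aT bT; apply: H; rewrite in_cons ?aT ?bT orbT.
case xk: (x < k) => //=.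
suff -> : count (fun a => a < k) T = 0 by [].
apply/eqP; rewrite -leqn0 leqNgt -has_count; apply/hasP => [[y yT yk]].
have xy : x != y by apply: contraNneq xn => ->.
case: (ltngtP x y) => h.
- by apply: (H x y); rewrite ?in_cons ?eqxx ?yT ?orbT.
- by apply: (H y x); rewrite ?in_cons ?eqxx ?yT ?orbT.
- by rewrite h eqxx in xy.
Qed.

Lemma new_elem (s1 s2 : seq nat) : uniq s1 -> uniq s2 -> size s1 = size s2 ->
  ~ (s1 =i s2) -> exists2 a, a \in s2 & a \notin s1.
Proof.
move=> u1 u2 sz H.
case hh: (has (fun a => a \notin s1) s2).
  by case/hasP: hh => a a2 a1; exists a.
exfalso; apply: H.
have sub : {subset s2 <= s1}.
  move=> a a2; apply/negPn; apply: contraFN hh => a1; apply/hasP; by exists a.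
have [_ E] := uniq_min_size u2 sub (eq_leq sz).
by move=> x; rewrite E.
Qed.

Section Trains.
Variable n : nat.
Variable m : nat -> nat.
Variable tau : nat -> nat -> seq nat.
Hypothesis htrain : forall j, j < n -> is_train n.+1 (m j) (tau j).

Lemma tr_uniq j i : j < n -> i <= m j -> uniq (tau j i).
Proof. by move=> jn im; case: (htrain jn) => H _ _; case: (H i im). Qed.

Lemma tr_size j i : j < n -> i <= m j -> size (tau j i) = n.+1.
Proof. by move=> jn im; case: (htrain jn) => H _ _; case: (H i im). Qed.

Lemma tr_fresh j i : j < n -> i < m j -> forall a, a \in tau j i.+1 -> a \notin tau j i ->
  forall b, b \in tau j i -> b < a.
Proof. by move=> jn im; case: (htrain jn) => _ _ H; apply: H. Qed.

Lemma tr_new j i : j < n -> i < m j ->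
  exists2 a, a \in tau j i.+1 & forall b, b \in tau j i -> b < a.
Proof.
move=> jn im; case: (htrain jn) => H1 H2 H3.
have im' : i <= m j by apply: ltnW.
have [a a1 a2] : exists2 a, a \in tau j i.+1 & a \notin tau j i.
  apply: new_elem.
  - exact: tr_uniq.
  - exact: tr_uniq.
  - by rewrite !tr_size.
  - apply: H2; lia.
by exists a => //; apply: tr_fresh.
Qed.

Lemma tr_order j i d : j < n -> i + d.+1 <= m j -> forall b, b \in tau j i ->
  exists2 a, a \in tau j (i + d.+1) & b < a.
Proof.
move=> jn; elim: d => [|d IH] idm b bi.
  have hh : i < m j by lia.
  have [a a1 a2] := tr_new jn hh.
  by exists a; rewrite ?addn1 //; apply: a2.
have hh : i + d.+1 <= m j by lia.
have [a' a'1 a'2] := IH hh b bi.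
have hh2 : i + d.+1 < m j by lia.
have [a a1 a2] := tr_new jn hh2.
by exists a; [rewrite addnS | exact: ltn_trans a'2 (a2 _ a'1)].
Qed.

Lemma tr_order' j i i' : j < n -> i < i' -> i' <= m j -> forall b, b \in tau j i ->
  exists2 a, a \in tau j i' & b < a.
Proof.
move=> jn ii' i'm; have -> : i' = i + (i' - i.+1).+1 by lia.
apply: tr_order => //; lia.
Qed.

Lemma tr_nest0 j i d : j < n -> i + d.+1 <= m j -> forall a, a \in tau j (i + d.+1) ->
  a \notin tau j i -> forall b, b \in tau j i -> b < a.
Proof.
move=> jn; elim: d => [|d IH] idm a ai ani b bi.
  by apply: (tr_fresh jn (_ : i < m j)) => //; [lia | rewrite -addn1].
case ain: (a \in tau j (i + d.+1)).
  by apply: IH => //; lia.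
have hh : i + d.+1 <= m j by lia.
have [a' a'1 a'2] := tr_order jn hh bi.
apply: ltn_trans a'2 _.
have hh2 : i + d.+1 < m j by lia.
have ai' : a \in tau j (i + d.+1).+1 by rewrite -addnS.
have ain' : a \notin tau j (i + d.+1) by rewrite ain.
exact: (tr_fresh jn hh2 ai' ain' a'1).
Qed.

Lemma tr_nest j i i' : j < n -> i <= i' -> i' <= m j -> forall a, a \in tau j i' ->
  (exists2 b, b \in tau j i & a <= b) -> a \in tau j i.
Proof.
move=> jn ii' i'm a ai [b bi ab].
case: (eqVneq i i') => [->//|ne].
apply/negPn/negP => ani.
have Hd : i' = i + (i' - i.+1).+1 by lia.
rewrite Hd in ai.
have hh : i + (i' - i.+1).+1 <= m j by lia.
have := tr_nest0 jn hh ai ani bi.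
move=> H; have : b < a by apply: H; lia.
lia.
Qed.
End Trains.

Section Main.
Variable n : nat.
Variable m : nat -> nat.
Variable tau : nat -> nat -> seq nat.
Variable c : nat -> nat -> color.
Hypothesis hn : 1 <= n.
Hypothesis htrain : forall j, j < n -> is_train n.+1 (m j) (tau j).

Definition monob (s : seq nat) (iota : color) : bool :=
  all (fun a => all (fun b => (a < b) ==> (c a b == iota)) s) s.

Lemma mono_monob s iota : mono_on c s iota -> monob s iota.
Proof.
move=> H; apply/allP => a aS; apply/allP => b bS; apply/implyP => ab.
by rewrite (H a b aS bS ab).
Qed.

Lemma monob_pair s iota a b : monob s iota -> a \in s -> b \in s -> a < b -> c a b = iota.
Proof.
move=> /allP H aS bS ab; have /allP H2 := H a aS.
by have /implyP/(_ ab)/eqP := H2 b bS.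
Qed.

Definition dem j nu i := (i <= m j) && monob (tau j i) (opp nu).
Definition sat (L : nat -> color) k (s : seq nat) nu := has (fun a => (k <= a) && (L a == nu)) s.
Definition started k (s : seq nat) := has (fun a => k <= a) s.
Definition act L k j nu i := [&& dem j nu i, ~~ sat L k (tau j i) nu & started k (tau j i)].
Definition r k (s : seq nat) := count (fun a => a < k) s.
Definition v L k j nu := minf (act L k j nu) (fun i => r k (tau j i)) n.+1 (iota 0 (m j).+1).
Definition Q L k t := \sum_(j < n) ((v L k j R <= t) + (v L k j B <= t)).
Definition Inv L k := forall t, t <= n -> Q L k t <= t.

Lemma v_le L k j nu : v L k j nu <= n.+1.
Proof. exact: minf_le_d. Qed.

Lemma v_le_act L k j nu i : act L k j nu i -> v L k j nu <= r k (tau j i).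
Proof.
move=> H; apply: minf_le => //; rewrite mem_iota add0n ltnS.
by case/and3P: H => /andP [].
Qed.

Lemma v_ge L k j nu b : (forall i, i <= m j -> act L k j nu i -> b <= r k (tau j i)) ->
  b <= n.+1 -> b <= v L k j nu.
Proof.
move=> H hb; apply: minf_ge => // i; rewrite mem_iota add0n ltnS => /andP [_ im].
exact: H.
Qed.

Lemma v_ex L k j nu : v L k j nu <= n ->
  exists i, [/\ i <= m j, act L k j nu i & r k (tau j i) = v L k j nu].
Proof.
move=> H; have hv : v L k j nu < n.+1 by [].
have [i iI /andP [a /eqP e]] := minf_ex hv.
by exists i; split => //; move: iI; rewrite mem_iota add0n ltnS => /andP [].
Qed.

Lemma OPP j i1 i2 nu K : j < n -> i1 <= i2 -> i2 <= m j -> dem j nu i1 -> dem j (opp nu) i2 ->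
  (exists2 b, b \in tau j i1 & K <= b.+1) -> r K (tau j i2) <= 1.
Proof.
move=> jn i12 i2m /andP [_ M1] /andP [_ M2] [b bi bK].
apply: count_le1; first exact: (tr_uniq htrain).
move=> a a' ai a'i aK a'K aa'.
have inn : forall x, x \in tau j i2 -> x < K -> x \in tau j i1.
  move=> x xi xK; apply: (tr_nest htrain jn i12 i2m xi); exists b => //; lia.
have e1 := monob_pair M1 (inn _ ai aK) (inn _ a'i a'K) aa'.
have e2 := monob_pair M2 ai a'i aa'.
move: e2; rewrite oppK e1 => e; move: (opp_neq nu); by rewrite e eqxx.
Qed.

Definition invd L k j nu i := [&& dem j nu i, ~~ sat L k.+1 (tau j i) nu & k \in tau j i].
Definition invc L k j nu :=
  has (fun i => invd L k j nu i && (r k.+1 (tau j i) == v L k.+1 j nu)) (iota 0 (m j).+1).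
Definition upd (L : nat -> color) k nu0 := fun a => if a == k then nu0 else L a.

Lemma sat_upd L k nu0 s nu :
  sat (upd L k nu0) k s nu = sat L k.+1 s nu || ((k \in s) && (nu0 == nu)).
Proof.
rewrite /sat /upd; apply/idP/idP.
  case/hasP => a aS /andP [ka]; case: (eqVneq a k) => [Eak e|ne e].
    by subst a; rewrite aS e orbT.
  by apply/orP; left; apply/hasP; exists a => //; rewrite e andbT; lia.
case/orP => [/hasP [a aS /andP [ka e]] | /andP [kS e]]; apply/hasP.
  exists a => //; have ak : (a == k) = false by apply/negbTE/eqP; lia.
  by rewrite ak e andbT; lia.
by exists k => //; rewrite eqxx leqnn.
Qed.

Lemma started_pred k s : started k s = started k.+1 s || (k \in s).
Proof.
rewrite /started; apply/idP/idP.
  case/hasP => a aS ka; case: (eqVneq a k) => [<-|ne]; first by rewrite aS orbT.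
  by apply/orP; left; apply/hasP; exists a => //; lia.
case/orP => [/hasP [a aS ka]|kS]; apply/hasP; first by exists a => //; lia.
by exists k.
Qed.

Lemma r_succ j i k : j < n -> i <= m j ->
  r k.+1 (tau j i) = r k (tau j i) + (k \in tau j i).
Proof. move=> jn im; apply: count_succ; exact: (tr_uniq htrain). Qed.

Lemma r_full k s : ~~ started k.+1 s -> r k.+1 s = size s.
Proof.
move=> H; apply/eqP; rewrite -all_count; apply/allP => a aS.
rewrite ltnNge; apply: contra H => h; apply/hasP; by exists a.
Qed.

Lemma r_le_size k s : r k s <= size s.
Proof. exact: count_size. Qed.

Lemma live_le L k j nu i : j < n -> dem j nu i -> ~~ sat L k.+1 (tau j i) nu ->
  started k (tau j i) -> v L k.+1 j nu <= r k.+1 (tau j i).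
Proof.
move=> jn d us st; case st1: (started k.+1 (tau j i)).
  by apply: v_le_act; rewrite /act d us st1.
have im : i <= m j by case/andP: d.
rewrite r_full ?st1 // (tr_size htrain) //; exact: v_le.
Qed.

Lemma invcP L k j nu : invc L k j nu ->
  exists i, [/\ i <= m j, invd L k j nu i & r k.+1 (tau j i) = v L k.+1 j nu].
Proof.
case/hasP => i; rewrite mem_iota add0n ltnS => /andP [_ im] /andP [d /eqP e].
by exists i.
Qed.

Lemma cls_noninv L k j nu nu0 : j < n -> ~~ invc L k j nu ->
  v L k.+1 j nu <= v (upd L k nu0) k j nu.
Proof.
move=> jn ni; apply: v_ge; last exact: v_le.
move=> i im /and3P [d us st]; rewrite sat_upd negb_or in us.
case/andP: us => us1 us2.
have hl := live_le jn d us1 st.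
rewrite (r_succ k jn im) in hl.
case ki: (k \in tau j i); last by rewrite ki addn0 in hl.
have : r k.+1 (tau j i) != v L k.+1 j nu.
  apply: contra ni => e; apply/hasP; exists i; first by rewrite mem_iota add0n ltnS.
  by rewrite /invd d us1 ki e.
rewrite (r_succ k jn im) ki => /eqP ne; rewrite ki in hl; lia.
Qed.

Lemma cls_any L k j nu nu0 : j < n ->
  v L k.+1 j nu <= (v (upd L k nu0) k j nu).+1.
Proof.
move=> jn; suff H : (v L k.+1 j nu).-1 <= v (upd L k nu0) k j nu by lia.
apply: v_ge; last first.
  have := v_le L k.+1 j nu; lia.
move=> i im /and3P [d us st]; rewrite sat_upd negb_or in us.
case/andP: us => us1 us2.
have hl := live_le jn d us1 st.
rewrite (r_succ k jn im) in hl; move: hl; case: (k \in tau j i) => /=; lia.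
Qed.

Lemma all_lt j i k : j < n -> i <= m j -> n < r k.+1 (tau j i) -> forall a, a \in tau j i -> a < k.+1.
Proof.
move=> jn im h.
have hs := r_le_size k.+1 (tau j i); rewrite (tr_size htrain jn im) in hs.
have : r k.+1 (tau j i) == size (tau j i) by rewrite (tr_size htrain jn im); apply/eqP; lia.
by rewrite /r -all_count => /allP.
Qed.

Lemma cls_win L k j nu : j < n -> invc L k j nu -> n.+1 <= v (upd L k nu) k j nu.
Proof.
move=> jn /invcP [i0 [i0m /and3P [d0 us0 k0] e0]].
apply: v_ge => // i im /and3P [d us st].
rewrite sat_upd negb_or eqxx andbT in us; case/andP: us => us1 kni.
have st1 : started k.+1 (tau j i) by move: st; rewrite started_pred (negbTE kni) orbF.
have hv : v L k.+1 j nu <= r k.+1 (tau j i) by apply: v_le_act; rewrite /act d us1 st1.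
exfalso; case: (ltngtP i0 i) => [lt|gt|eq].
- have H : r k.+1 (tau j i) <= r k (tau j i0).
    apply: cnt_sub; first exact: (tr_uniq htrain).
    move=> a ai ak1.
    have ak : a != k by apply: contraNneq kni => <-.
    have ai0 : a \in tau j i0.
      apply: (tr_nest htrain jn (ltnW lt) im ai); exists k => //; lia.
    rewrite ai0 /=; move/eqP: ak; lia.
  have := r_succ k jn i0m; rewrite k0 e0 /=; lia.
- case/hasP: st1 => b bi kb.
  have : k \in tau j i by apply: (tr_nest htrain jn (ltnW gt) i0m k0); exists b => //; lia.
  by rewrite (negbTE kni).
- by subst i0; rewrite k0 in kni.
Qed.

Lemma F1 L K j : j < n -> v L K j R <= n -> v L K j B <= n ->
  v L K j R <= 1 \/ v L K j B <= 1.
Proof.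
move=> jn /v_ex [iR [iRm /and3P [dR _ stR] eR]] /v_ex [iB [iBm /and3P [dB _ stB] eB]].
case: (leqP iR iB) => h.
  right; rewrite -eB; apply: (OPP (nu := R) jn h iBm dR dB).
  by case/hasP: stR => b bi kb; exists b => //; lia.
left; rewrite -eR; apply: (OPP (nu := B) jn (ltnW h) iRm dB dR).
by case/hasP: stB => b bi kb; exists b => //; lia.
Qed.

Lemma F2 L k j nu : j < n -> invc L k j nu -> n < v L k.+1 j nu ->
  v L k.+1 j (opp nu) <= 1 \/ n < v L k.+1 j (opp nu).
Proof.
move=> jn /invcP [i0 [i0m /and3P [d0 us0 k0] e0]] hv.
case: (leqP (v L k.+1 j (opp nu)) n) => hvo; last by right.
left; have [i [im /and3P [d us st] e]] := v_ex hvo.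
have al := all_lt jn i0m (_ : n < r k.+1 (tau j i0)); rewrite e0 in al.
case: (ltnP i i0) => h.
  case/hasP: st => b bi kb.
  have [a ai ba] := tr_order' htrain jn h i0m bi.
  have := al hv a ai; lia.
rewrite -e; apply: (OPP jn h im d0 d); exists k => //.
Qed.

Lemma F3 L k j nu : j < n -> invc L k j nu -> n < v L k.+1 j nu ->
  invc L k j (opp nu) -> n < v L k.+1 j (opp nu) -> False.
Proof.
move=> jn /invcP [i0 [i0m /and3P [d0 us0 k0] e0]] hv
  /invcP [i1 [i1m /and3P [d1 us1 k1] e1]] hv1.
have al0 := all_lt jn i0m (_ : n < r k.+1 (tau j i0)); rewrite e0 in al0.
have al1 := all_lt jn i1m (_ : n < r k.+1 (tau j i1)); rewrite e1 in al1.
case: (ltngtP i0 i1) => h.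
- have [a ai ka] := tr_order' htrain jn h i1m k0; have := al1 hv1 a ai; lia.
- have [a ai ka] := tr_order' htrain jn h i0m k1; have := al0 hv a ai; lia.
- subst i1; have := OPP jn (leqnn i0) i0m d0 d1 (_ : exists2 b, b \in tau j i0 & k.+1 <= b.+1).
  rewrite e0; move=> H; have : v L k.+1 j nu <= 1 by apply: H; exists k.
  lia.
Qed.

Lemma F1' L K j nu : j < n -> v L K j nu <= n -> v L K j (opp nu) <= n ->
  v L K j nu <= 1 \/ v L K j (opp nu) <= 1.
Proof.
move=> jn h1 h2; case: nu h1 h2 => /= h1 h2; first exact: F1.
by case: (F1 jn h2 h1); [right | left].
Qed.

Lemma trainA' L k nuw j : j < n ->
  (v (upd L k nuw) k j nuw <= n) + (v (upd L k nuw) k j (opp nuw) <= n) <=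
  1 + ((v L k.+1 j nuw <= 1) + (v L k.+1 j (opp nuw) <= 1)).
Proof.
move=> jn.
case h1: (v (upd L k nuw) k j nuw <= n); last by rewrite /=; case: (_ <= n).
case h2: (v (upd L k nuw) k j (opp nuw) <= n); last by rewrite /= addn0; case: (_ <= 1).
suff : (v L k.+1 j nuw <= 1) || (v L k.+1 j (opp nuw) <= 1).
  by case/orP => ->; rewrite //=; case: (_ <= 1).
have X1 : v L k.+1 j nuw <= n.
  case iv: (invc L k j nuw).
    by have := cls_win jn iv; move: h1; lia.
  have := cls_noninv nuw jn (negbT iv); move: h1; lia.
case: (leqP (v L k.+1 j (opp nuw)) n) => X2.
  by case: (F1' jn X1 X2) => ->; rewrite ?orbT.
have iv : invc L k j (opp nuw).
  apply/negPn/negP => ni; have := cls_noninv nuw jn ni; move: h2 X2; lia.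
case: (F2 jn iv X2); rewrite oppK => h; first by rewrite h.
by move: X1 h; lia.
Qed.

Lemma trainB' L k nuw j : j < n -> invc L k j nuw ->
  (v (upd L k nuw) k j nuw <= n) + (v (upd L k nuw) k j (opp nuw) <= n) <=
  (v L k.+1 j nuw <= 1) + (v L k.+1 j (opp nuw) <= 1).
Proof.
move=> jn ivw.
have -> : (v (upd L k nuw) k j nuw <= n) = false.
  by apply/negbTE; rewrite -ltnNge; exact: cls_win.
rewrite add0n.
case h2: (v (upd L k nuw) k j (opp nuw) <= n) => //.
suff : (v L k.+1 j nuw <= 1) || (v L k.+1 j (opp nuw) <= 1).
  by case/orP => ->; rewrite //=; case: (_ <= 1).
case: (leqP (v L k.+1 j (opp nuw)) n) => X2.
  case: (leqP (v L k.+1 j nuw) n) => X1.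
    by case: (F1' jn X1 X2) => ->; rewrite ?orbT.
  by case: (F2 jn ivw X1) => h; [rewrite h orbT | move: X2 h; lia].
have iv : invc L k j (opp nuw).
  apply/negPn/negP => ni; have := cls_noninv nuw jn ni; move: h2 X2; lia.
case: (F2 jn iv X2); rewrite oppK => h; first by rewrite h.
exfalso; apply: (F3 jn ivw h iv X2).
Qed.

Lemma ind_mono a b t : a <= b -> ((b <= t) : nat) <= (a <= t).
Proof. by move=> ab; case: (leqP b t) => // bt; rewrite (leq_trans ab bt). Qed.

Lemma sum_lt (a b : 'I_n -> nat) (j0 : 'I_n) : (forall j, a j <= b j) -> a j0 < b j0 ->
  (\sum_(j < n) a j).+1 <= \sum_(j < n) b j.
Proof.
move=> H H0; rewrite (bigD1 j0) //= [X in _ <= X](bigD1 j0) //=.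
rewrite -addSn; apply: leq_add => //; apply: leq_sum => j _; exact: H.
Qed.

Lemma ind_shift a b t : a <= b.+1 -> ((b <= t) : nat) <= (a <= t.+1).
Proof. by move=> ab; case: (leqP b t) => // bt; rewrite (leq_trans ab). Qed.

Lemma Qswap L K t nu : Q L K t = \sum_(j < n) ((v L K j nu <= t) + (v L K j (opp nu) <= t)).
Proof. by case: nu => //; apply: eq_bigr => j _; rewrite addnC. Qed.

Lemma step L k : Inv L k.+1 -> exists L', Inv L' k.
Proof.
move=> HI.
case E: (has (fun j => invc L k j R || invc L k j B) (iota 0 n)); last first.
  exists (upd L k R) => t tn; apply: leq_trans (HI t tn).
  apply: leq_sum => j _; have jn := ltn_ord j.
  have ni : forall nu, ~~ invc L k j nu.
    move=> nu; apply: contraFN E => h; apply/hasP; exists (nat_of_ord j).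
      by rewrite mem_iota.
    by case: nu h => ->; rewrite ?orbT.
  by apply: leq_add; apply: ind_mono; apply: cls_noninv.
pose P := fun val => has (fun j => (invc L k j R && (v L k.+1 j R == val)) ||
                                    (invc L k j B && (v L k.+1 j B == val))) (iota 0 n).
have PP : forall j nu, j < n -> invc L k j nu -> P (v L k.+1 j nu).
  move=> j nu jn iv; apply/hasP; exists j; first by rewrite mem_iota.
  by case: nu iv => ->; rewrite eqxx ?orbT.
have exP : exists val, P val.
  case/hasP: E => j; rewrite mem_iota add0n => jn /orP [h|h]; eexists; exact: PP jn h.
case: (ex_minnP exP) => mw Pmw minw.
have [jw [nuw [jwn ivw ew]]] :
    exists jw nuw, [/\ jw < n, invc L k jw nuw & v L k.+1 jw nuw = mw].
  case/hasP: Pmw => j; rewrite mem_iota add0n => jn.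
  case/orP => /andP [h /eqP e].
    by exists j, R.
  by exists j, B.
have minc : forall j nu, j < n -> invc L k j nu -> mw <= v L k.+1 j nu.
  by move=> j nu jn iv; apply: minw; exact: PP.
exists (upd L k nuw) => t tn.
rewrite (Qswap _ _ _ nuw).
case: (ltnP t n) => tn'.
  case: (boolP (has (fun j => invc L k j (opp nuw) && (v L k.+1 j (opp nuw) <= t.+1)) (iota 0 n))) => HB.
    have := HI t.+1 tn'; rewrite (Qswap _ _ _ nuw) => H.
    suff : (\sum_(j < n) ((v (upd L k nuw) k j nuw <= t) + (v (upd L k nuw) k j (opp nuw) <= t))).+1
           <= \sum_(j < n) ((v L k.+1 j nuw <= t.+1) + (v L k.+1 j (opp nuw) <= t.+1)).
      by move=> H2; move: (leq_trans H2 H); rewrite ltnS.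
    apply: (@sum_lt _ _ (Ordinal jwn)).
      move=> j; have jn := ltn_ord j.
      by apply: leq_add; apply: ind_shift; apply: cls_any.
    rewrite /=.
    have -> : (v (upd L k nuw) k jw nuw <= t) = false.
      apply/negbTE; rewrite -ltnNge; apply: leq_trans (cls_win jwn ivw); lia.
    have -> : (v L k.+1 jw nuw <= t.+1) = true.
      case/hasP: HB => j; rewrite mem_iota add0n => jn /andP [iv h].
      have := minc j _ jn iv; rewrite ew; lia.
    rewrite add0n add1n ltnS; apply: ind_shift; exact: cls_any jwn.
  apply: (@leq_trans (Q L k.+1 t)); last exact: (HI t tn).
  rewrite (Qswap _ _ _ nuw).
  apply: leq_sum => j _; have jn := ltn_ord j.
  apply: leq_add.
    case iv: (invc L k j nuw).
      have -> : (v (upd L k nuw) k j nuw <= t) = false.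
        apply/negbTE; rewrite -ltnNge; apply: leq_trans (cls_win jn iv); lia.
      by [].
    by apply: ind_mono; apply: (cls_noninv nuw jn); rewrite iv.
  case iv: (invc L k j (opp nuw)).
    have hv : t.+1 < v L k.+1 j (opp nuw).
      rewrite ltnNge; apply: contra HB => h; apply/hasP; exists (nat_of_ord j).
        by rewrite mem_iota.
      by rewrite iv h.
    have -> : (v (upd L k nuw) k j (opp nuw) <= t) = false.
      apply/negbTE; rewrite -ltnNge; have := @cls_any L k j (opp nuw) nuw jn; lia.
    by [].
  by apply: ind_mono; apply: (cls_noninv nuw jn); rewrite iv.
have tn2 : t = n by lia.
subst t.
have H1 := HI 1 hn; rewrite (Qswap _ _ _ nuw) in H1.
suff : (\sum_(j < n) ((v (upd L k nuw) k j nuw <= n) + (v (upd L k nuw) k j (opp nuw) <= n))).+1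
       <= \sum_(j < n) (1 + ((v L k.+1 j nuw <= 1) + (v L k.+1 j (opp nuw) <= 1))).
  have E1 : \sum_(j < n) (1 + ((v L k.+1 j nuw <= 1) + (v L k.+1 j (opp nuw) <= 1))) =
      n + \sum_(j < n) ((v L k.+1 j nuw <= 1) + (v L k.+1 j (opp nuw) <= 1)).
    by rewrite big_split /= big_const_ord iter_addn_0 mul1n.
  rewrite E1; lia.
apply: (@sum_lt _ _ (Ordinal jwn)).
  move=> j; exact: trainA' (ltn_ord j).
rewrite /= add1n ltnS; exact: trainB' jwn ivw.
Qed.

Definition Nb := \max_(j < n) \max_(i < (m j).+1) \max_(a <- tau j i) a.+1.

Lemma Nb_bound j i a : j < n -> i <= m j -> a \in tau j i -> a < Nb.
Proof.
move=> jn im ai.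
have h1 : a.+1 <= \max_(a <- tau j i) a.+1 by apply: (leq_bigmax_seq a ai).
have im' : i < (m j).+1 by [].
have h2 := @leq_bigmax _ (fun i : 'I_(m j).+1 => \max_(a <- tau j i) a.+1) (Ordinal im').
have h3 := @leq_bigmax _ (fun j : 'I_n => \max_(i < (m j).+1) \max_(a <- tau j i) a.+1) (Ordinal jn).
rewrite /Nb; apply: leq_trans h3; apply: leq_trans h2; exact: h1.
Qed.

Lemma base : Inv (fun _ => R) Nb.
Proof.
move=> t tn; rewrite /Q big1 // => j _.
have jn := ltn_ord j.
have hv : forall nu, n.+1 <= v (fun _ => R) Nb j nu.
  move=> nu; apply: v_ge => // i im /and3P [_ _ /hasP [a ai ka]].
  by have := Nb_bound jn im ai; lia.
have -> : (v (fun _ => R) Nb j R <= t) = false by apply/negbTE; have := hv R; lia.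
have -> : (v (fun _ => R) Nb j B <= t) = false by apply/negbTE; have := hv B; lia.
by [].
Qed.

Lemma iterate d : d <= Nb -> exists L, Inv L (Nb - d).
Proof.
elim: d => [_|d IH dN]; first by exists (fun _ => R); rewrite subn0; exact: base.
have [L HL] := IH (ltnW dN).
have e : Nb - d = (Nb - d.+1).+1 by lia.
rewrite e in HL; exact: step HL.
Qed.

Lemma solve : exists L : nat -> color, forall j i iota, j < n -> i <= m j ->
  mono_on c (tau j i) iota -> exists2 a, a \in tau j i & L a = opp iota.
Proof.
have [L HL] := iterate (leqnn Nb); rewrite subnn in HL.
exists L => j i iota jn im mo.
have d : dem j (opp iota) i by rewrite /dem im oppK mono_monob.
case st: (sat L 0 (tau j i) (opp iota)).
  by case/hasP: st => a ai /andP [_ /eqP e]; exists a.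
exfalso.
have ac : act L 0 j (opp iota) i.
  rewrite /act d st /=; apply/hasP.
  have : 0 < size (tau j i) by rewrite (tr_size htrain jn im).
  case: (tau j i) => //= x s _; exists x => //; exact: mem_head.
have hv := v_le_act ac.
have r0 : r 0 (tau j i) = 0 by rewrite /r; apply/eqP; rewrite -leqn0 leqNgt -has_count; apply/hasP => [[x _]].
rewrite r0 in hv.
have := HL 0 (leq0n n); rewrite /Q (bigD1 (Ordinal jn)) //=.
case: (iota) hv => /= hv; rewrite leqn0 in hv; rewrite (eqP hv) /=; lia.
Qed.

End Main.

Unset Implicit Arguments.

Theorem mainTheorem1 (n : nat) (hn : 1 <= n) (m : nat -> nat)
    (tau : nat -> nat -> seq nat)
    (htrain : forall j, j < n -> is_train n.+1 (m j) (tau j))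
    (c : nat -> nat -> color) :
  exists cstar : nat -> color,
    forall j i (iota : color), j < n -> i <= m j ->
      mono_on c (tau j i) iota ->
      exists2 a, a \in tau j i & cstar a = opp iota.
Proof. exact: (solve c hn htrain). Qed.
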